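(* Let $\mathcal{D}$ be a dictionary over a finite alphabet $\mathscr{A}$ with GAP-graphs $(\mathscr{G}_k)_{k\in\mathbb{N}}$. If $\mathscr{G}_{k_0}$ is strongly connected for some $k_0\in\mathbb{N}$, then $\mathscr{G}_k$ is strongly connected for every $k\leq k_0$. In particular, if $\mathscr{G}_{l_0}$ is not strongly connected, then $\mathscr{G}_l$ is not strongly connected for every $l\geq l_0$.
   Context: A dictionary is a non-empty set $\mathcal{D}$ of finite words over $\mathscr{A}$ containing the empty word, closed under taking subwords, and such that for each $u\in\mathcal{D}$ there are letters $a,b$ with $aub\in\mathcal{D}$. The GAP-graph $\mathscr{G}_k$ is the oriented graph with vertex set $\mathcal{D}\cap\mathscr{A}^k$, edge set $\mathcal{D}\cap\mathscr{A}^{k+1}$, the edge $a_0\cdots a_k$ going from $a_0\cdots a_{k-1}$ to $a_1\cdots a_k$. A path is a sequence of edges with the end of each equal to the origin of the next; an oriented graph is strongly connected if for any two vertices $u,v$ there are paths from $u$ to $v$ and from $v$ to $u$. *)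

(* Defs.v *)
From mathcomp Require Import all_boot.
Set Implicit Arguments. Unset Strict Implicit. Unset Printing Implicit Defensive.

Section Dict.
Variable A : finType.

Definition subword (u w : seq A) : Prop := exists p s, w = p ++ u ++ s.

Definition dictionary (D : seq A -> Prop) : Prop :=
  [/\ D [::],
      (forall w u, D w -> subword u w -> D u) &
      (forall u, D u -> exists a b : A, D (a :: rcons u b))].

(* GAP-graph G_k: vertices = words of D of length k, edges = words of D of length k+1;
   the edge a_0..a_k goes from a_0..a_{k-1} (= take k e) to a_1..a_k (= drop 1 e). *)
Definition gap_vertex (D : seq A -> Prop) (k : nat) (u : seq A) : Prop :=
  D u /\ size u = k.
Definition gap_edge (D : seq A -> Prop) (k : nat) (e : seq A) : Prop :=
  D e /\ size e = k.+1.
Definition edge_origin (k : nat) (e : seq A) : seq A := take k e.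
Definition edge_end (e : seq A) : seq A := drop 1 e.

Fixpoint gap_path (D : seq A -> Prop) (k : nat) (u : seq A) (es : seq (seq A)) (v : seq A)
  : Prop :=
  match es with
  | [::] => u = v
  | e :: es' => gap_edge D k e /\ edge_origin k e = u /\ gap_path D k (edge_end e) es' v
  end.

Definition strongly_connected (D : seq A -> Prop) (k : nat) : Prop :=
  forall u v, gap_vertex D k u -> gap_vertex D k v -> exists es, gap_path D k u es v.

End Dict.

(* Main.v *)
Require Import Defs.
From mathcomp Require Import all_boot.

Lemma path_proj {A : finType} {D : seq A -> Prop} :
  dictionary D -> forall k es w w',
  gap_path D k.+1 w es w' -> gap_path D k (drop 1 w) (map (drop 1) es) (drop 1 w').
Proof.
move=> [_ Hsub _] k; elim=> [|e es IH] w w' /=; first by move=> ->.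
move=> [[De He] [Ho Hp]]; split; last split.
- split; last by rewrite size_drop He subn1.
  apply: (Hsub e); first by [].
  by exists (take 1 e), [::]; rewrite cats0 cat_take_drop.
- by rewrite /edge_origin take_drop addn1 -Ho.
- by have := IH _ _ Hp.
Qed.

Lemma sc_step {A : finType} {D : seq A -> Prop} :
  dictionary D -> forall k, strongly_connected D k.+1 -> strongly_connected D k.
Proof.
move=> HD k Hsc u v [Du Su] [Dv Sv].
have [D0 Hsub Hext] := HD.
have [a [b Hab]] := Hext _ Du.
have [a' [b' Hab']] := Hext _ Dv.
have Hau : D (a :: u).
  apply: Hsub Hab _; exists [::], [:: b]; by rewrite /= -cats1.
have Hav : D (a' :: v).
  apply: Hsub Hab' _; exists [::], [:: b']; by rewrite /= -cats1.
have Su' : size (a :: u) = k.+1 by rewrite /= Su.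
have Sv' : size (a' :: v) = k.+1 by rewrite /= Sv.
have [es Hes] := Hsc (a :: u) (a' :: v) (conj Hau Su') (conj Hav Sv').
have := path_proj HD k es _ _ Hes; rewrite /= !drop0 => H.
by exists (map (drop 1) es).
Qed.

Theorem proposition7 (A : finType) (D : seq A -> Prop) :
  dictionary D ->
  (forall k0 : nat, strongly_connected D k0 ->
     forall k : nat, k <= k0 -> strongly_connected D k) /\
  (forall l0 : nat, ~ strongly_connected D l0 ->
     forall l : nat, l0 <= l -> ~ strongly_connected D l).
Proof.
move=> HD.
have P1 : forall k0 : nat, strongly_connected D k0 ->
     forall k : nat, k <= k0 -> strongly_connected D k.
  move=> k0 Hk0 k Hk; rewrite -(subnK Hk) in Hk0; elim: (k0 - k) Hk0 => [|n IH] H.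
    by rewrite add0n in H.
  by apply: IH; apply: (sc_step HD); rewrite -addSn.
split => //.
by move=> l0 Hn l Hl Hsc; apply: Hn; apply: P1 Hsc _ Hl.
Qed.
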